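(* Let $\mathbf{L}\in\{\mathbf{K}_D,\mathbf{KD}_D\}$. Let $\Gamma,\Delta$ be finite multisets of formulas, $p$ a propositional variable and $a$ an agent symbol. Then there exists a formula $A$ such that: (i) $\mathsf{V}(A)\subseteq\mathsf{V}(\Gamma\cup\Delta)\setminus\{p\}$ and $\mathsf{Agt}(A)\subseteq\mathsf{Agt}(\Gamma\cup\Delta)\setminus\{a\}$; (ii) $\mathsf{G}(\mathbf{L})\vdash\Gamma,A\Rightarrow\Delta$; (iii) for all finite multisets $\Pi,\Lambda$ of formulas with $p\notin\mathsf{V}(\Pi\cup\Lambda)$ and $a\notin\mathsf{Agt}(\Pi\cup\Lambda)$: if $\mathsf{G}(\mathbf{L})\vdash\Pi,\Gamma\Rightarrow\Delta,\Lambda$, then $\mathsf{G}(\mathbf{L})\vdash\Pi\Rightarrow A,\Lambda$.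
   Context: Language: fix a finite nonempty set $\mathsf{Agt}$ of agent symbols and a countable set $\mathsf{Prop}$ of propositional variables; $\mathsf{Grp}$ is the set of nonempty subsets of $\mathsf{Agt}$. Formulas: $\alpha::=p\mid\bot\mid\alpha\wedge\alpha\mid\alpha\vee\alpha\mid\alpha\rightarrow\alpha\mid\neg\alpha\mid D_G\alpha$ with $p\in\mathsf{Prop}$, $G\in\mathsf{Grp}$. $\mathsf{V}(\cdot)$ is the set of propositional variables occurring, $\mathsf{Agt}(\cdot)$ the set of agent symbols occurring (the union of all $G$ with $D_G$ occurring); for multisets these are unions. An outmost-boxed formula is one of the form $D_G\gamma$. Sequent calculi: a sequent $\Gamma\Rightarrow\Delta$ is a pair of finite multisets of formulas; $\mathsf{G}(\mathbf{L})\vdash S$ means $S$ is the root of a finite tree built from initial sequents by the rules. $\mathsf{G}(\mathbf{K}_D)$ has initial sequents $\Gamma,p\Rightarrow p,\Delta$ ($p\in\mathsf{Prop}$) and $\bot,\Gamma\Rightarrow\Delta$; the propositional rules: $(R\wedge)$ from $\Gamma\Rightarrow\Delta,\alpha_1$ and $\Gamma\Rightarrow\Delta,\alpha_2$ infer $\Gamma\Rightarrow\Delta,\alpha_1\wedge\alpha_2$; $(L\wedge)$ from $\alpha_1,\alpha_2,\Gamma\Rightarrow\Delta$ infer $\alpha_1\wedge\alpha_2,\Gamma\Rightarrow\Delta$; $(R\vee)$ from $\Gamma\Rightarrow\Delta,\alpha_1,\alpha_2$ infer $\Gamma\Rightarrow\Delta,\alpha_1\vee\alpha_2$; $(L\vee)$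 from $\alpha_1,\Gamma\Rightarrow\Delta$ and $\alpha_2,\Gamma\Rightarrow\Delta$ infer $\alpha_1\vee\alpha_2,\Gamma\Rightarrow\Delta$; $(R\rightarrow)$ from $\alpha_1,\Gamma\Rightarrow\Delta,\alpha_2$ infer $\Gamma\Rightarrow\Delta,\alpha_1\rightarrow\alpha_2$; $(L\rightarrow)$ from $\Gamma\Rightarrow\Delta,\alpha_1$ and $\alpha_2,\Gamma\Rightarrow\Delta$ infer $\alpha_1\rightarrow\alpha_2,\Gamma\Rightarrow\Delta$; $(R\neg)$ from $\alpha,\Gamma\Rightarrow\Delta$ infer $\Gamma\Rightarrow\Delta,\neg\alpha$; $(L\neg)$ from $\Gamma\Rightarrow\Delta,\alpha$ infer $\neg\alpha,\Gamma\Rightarrow\Delta$; and $(D_K)$: from $\alpha_1,\dots,\alpha_n\Rightarrow\beta$ ($n\ge0$) infer $\Sigma,D_{G_1}\alpha_1,\dots,D_{G_n}\alpha_n\Rightarrow D_G\beta,\Omega$, provided $G_i\subseteq G$ for all $i$, $\Sigma$ consists only of propositional variables, $\bot$, and formulas $D_H\gamma$ with $H\not\subseteq G$, and $\Omega$ consists only of propositional variables, $\bot$ and outmost-boxed formulas. $\mathsf{G}(\mathbf{KD}_D)$ adds $(D_D)$: from $\Gamma\Rightarrow$ (empty succedent) with $\Gamma$ nonempty infer $\Sigma,D_{\{a\}}\Gamma\Rightarrow\Omega$ ($a\in\mathsf{Agt}$, $D_{\{a\}}\Gamma=\{D_{\{a\}}\gamma:\gamma\in\Gamma\}$), provided $\Sigma$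 consists only of propositional variables, $\bot$, and formulas $D_H\gamma$ with $H\neq\{a\}$, and $\Omega$ only of propositional variables, $\bot$ and outmost-boxed formulas. *)

(* Defs.v *)
From Stdlib Require Import Permutation.
From mathcomp Require Import all_boot.


Set Implicit Arguments. Unset Strict Implicit. Unset Printing Implicit Defensive.

Section Defs.
Variable Ag : finType.

Definition grp := {G : {set Ag} | G != set0}.

Inductive form : Type :=
| Var of nat
| Bot
| And of form & form
| Or of form & form
| Imp of form & form
| Neg of form
| Box of grp & form.

Fixpoint vars (f : form) : seq nat :=
  match f with
  | Var q => [:: q]
  | Bot => [::]
  | And f1 f2 | Or f1 f2 | Imp f1 f2 => vars f1 ++ vars f2
  | Neg f1 => vars f1
  | Box _ f1 => vars f1
  end.

Fixpoint agts (f : form) : {set Ag} :=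
  match f with
  | Var _ | Bot => set0
  | And f1 f2 | Or f1 f2 | Imp f1 f2 => agts f1 :|: agts f2
  | Neg f1 => agts f1
  | Box G f1 => sval G :|: agts f1
  end.

Definition varsl (s : seq form) : seq nat := flatten (map vars s).
Definition agtsl (s : seq form) : {set Ag} := \bigcup_(f <- s) agts f.

Lemma set1_nonempty (a : Ag) : [set a] != set0.
Proof. by apply/set0Pn; exists a; rewrite set11. Qed.

Definition sgrp (a : Ag) : grp := exist _ [set a] (set1_nonempty a).

Definition is_atom_or_bot (f : form) : bool :=
  match f with Var _ | Bot => true | _ => false end.
Definition omega_ok (f : form) : bool :=
  match f with Var _ | Bot | Box _ _ => true | _ => false end.
Definition sigmaK_ok (G : grp) (f : form) : bool :=
  match f with
  | Var _ | Bot => true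
  | Box H _ => ~~ (sval H \subset sval G)
  | _ => false
  end.
Definition sigmaD_ok (a : Ag) (f : form) : bool :=
  match f with
  | Var _ | Bot => true
  | Box H _ => sval H != [set a]
  | _ => false
  end.

Inductive logic := LK | LKD.

(* Sequents are pairs of lists taken up to permutation (= finite multisets). *)
Inductive deriv (L : logic) : seq form -> seq form -> Prop :=
| d_perm G D G' D' : deriv L G D -> Permutation G G' -> Permutation D D' -> deriv L G' D'
| d_id q G D : deriv L (Var q :: G) (Var q :: D)
| d_bot G D : deriv L (Bot :: G) D
| d_Rand G D a1 a2 : deriv L G (a1 :: D) -> deriv L G (a2 :: D) -> deriv L G (And a1 a2 :: D)
| d_Land G D a1 a2 : deriv L (a1 :: a2 :: G) D -> deriv L (And a1 a2 :: G) D
| d_Ror G D a1 a2 : deriv L G (a1 :: a2 :: D) -> deriv L G (Or a1 a2 :: D)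
| d_Lor G D a1 a2 : deriv L (a1 :: G) D -> deriv L (a2 :: G) D -> deriv L (Or a1 a2 :: G) D
| d_Rimp G D a1 a2 : deriv L (a1 :: G) (a2 :: D) -> deriv L G (Imp a1 a2 :: D)
| d_Limp G D a1 a2 : deriv L G (a1 :: D) -> deriv L (a2 :: G) D -> deriv L (Imp a1 a2 :: G) D
| d_Rneg G D a1 : deriv L (a1 :: G) D -> deriv L G (Neg a1 :: D)
| d_Lneg G D a1 : deriv L G (a1 :: D) -> deriv L (Neg a1 :: G) D
(* (D_K): premise alpha_1..alpha_n => beta; boxes = [(G_1,alpha_1);...;(G_n,alpha_n)] *)
| d_DK (boxes : seq (grp * form)) (G : grp) (b : form) (Sig Om : seq form) :
    deriv L (map snd boxes) [:: b] ->
    all (fun x : grp * form => sval x.1 \subset sval G) boxes ->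
    all (sigmaK_ok G) Sig ->
    all omega_ok Om ->
    deriv L (Sig ++ map (fun x => Box x.1 x.2) boxes) (Box G b :: Om)
| d_DD (a : Ag) (Gm Sig Om : seq form) :
    L = LKD ->
    Gm <> [::] ->
    deriv L Gm [::] ->
    all (sigmaD_ok a) Sig ->
    all omega_ok Om ->
    deriv L (Sig ++ map (Box (sgrp a)) Gm) Om.

End Defs.

(* Main.v *)
Require Import Defs.
From Stdlib Require Import Permutation ClassicalEpsilon.
From HB Require Import structures.
From mathcomp Require Import all_boot zify.
Set Warnings "-notation-overridden".
Set Implicit Arguments. Unset Strict Implicit. Unset Printing Implicit Defensive.

Section S.
Variable Ag : finType.
Notation form := (form Ag).

Fixpoint feqb (f g : form) : bool :=
  match f, g with
  | Var n, Var m => n == m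
  | Bot, Bot => true
  | And a b, And c d => feqb a c && feqb b d
  | Or a b, Or c d => feqb a c && feqb b d
  | Imp a b, Imp c d => feqb a c && feqb b d
  | Neg a, Neg c => feqb a c
  | Box G a, Box H c => (G == H) && feqb a c
  | _, _ => false
  end.

Lemma feqP : Equality.axiom feqb.
Proof.
elim=> [n||f1 IH1 f2 IH2|f1 IH1 f2 IH2|f1 IH1 f2 IH2|f1 IH1|G f1 IH1] [m||g1 g2|g1 g2|g1 g2|g1|H g1] /=;
  try (by constructor);
  try (by apply: (iffP eqP) => [->|[]]);
  try (by apply: (iffP andP) => [[/IH1 -> /IH2 ->]|[<- <-]]; split; [apply/IH1|apply/IH2]).
- by apply: (iffP (IH1 g1)) => [->|[]].
- by apply: (iffP andP) => [[/eqP -> /IH1 ->]|[<- <-]]; split; [apply/eqP|apply/IH1].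
Qed.

HB.instance Definition _ := hasDecEq.Build form feqP.

Lemma Perm_of_pe (s t : seq form) : perm_eq s t -> Permutation s t.
Proof.
elim: s t => [|x s IH] t.
  by move=> /perm_size; case: t => // _; constructor.
move=> pe.
have xt : x \in t by rewrite -(perm_mem pe) mem_head.
have pt := perm_to_rem xt.
have: perm_eq s (rem x t) by rewrite -(perm_cons x) (perm_trans pe pt).
move/IH => P.
apply: (Permutation_trans (l' := x :: rem x t)); first by constructor.
elim: t xt {pe pt P} => [//|y t IHt] /=.
rewrite in_cons; case: (y =P x) => [-> _|ne /= xt]; first by apply: Permutation_refl.
rewrite (_ : (x == y) = false) /= in xt; last by apply/eqP => e; apply: ne.
apply: Permutation_trans (perm_swap _ _ _) _.
by constructor; apply: IHt.
Qed.

Lemma pe_of_Perm (s t : seq form) : Permutation s t -> perm_eq s t.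
Proof.
elim=> //= [x l l' _ h|x y l|l l' l'' _ h1 _ h2].
- by rewrite perm_cons.
- by apply/permP => q /=; lia.
- exact: perm_trans h1 h2.
Qed.

Lemma cnt_cons (T : eqType) (P : pred T) x (s : seq T) : count P (x :: s) = P x + count P s.
Proof. by []. Qed.
Lemma cnt_nil (T : eqType) (P : pred T) : count P ([::] : seq T) = 0.
Proof. by []. Qed.

Ltac cnorm := repeat (rewrite ?count_cat ?cnt_cons ?cnt_nil).
Ltac clear_nonnat := repeat match goal with H : ?T |- _ =>
   match type of T with Prop =>
     match T with @eq nat _ _ => fail 1 | _ => clear H end end end.
Ltac psolve := apply/permP => ?; cnorm; clear_nonnat; lia.

Lemma dP L (X Y X' Y' : seq form) :
  deriv L X Y -> perm_eq X X' -> perm_eq Y Y' -> deriv L X' Y'.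
Proof. by move=> d /Perm_of_pe h1 /Perm_of_pe h2; apply: d_perm d h1 h2. Qed.

Lemma test (x y : form) l m : perm_eq (x :: l ++ y :: m) (m ++ y :: l ++ [:: x]).
Proof. psolve. Qed.


Fixpoint fsize (f : form) : nat :=
  match f with
  | Var _ | Bot => 1
  | And f1 f2 | Or f1 f2 | Imp f1 f2 => (fsize f1 + fsize f2).+1
  | Neg f1 | Box _ f1 => (fsize f1).+1
  end.

Lemma fsize_gt0 f : 0 < fsize f. Proof. by case: f. Qed.

Lemma grp_eq (g h : grp Ag) : sval g = sval h -> g = h.
Proof. by move=> e; apply: val_inj. Qed.

Lemma dPl L (X Y X' : seq form) : deriv L X Y -> perm_eq X X' -> deriv L X' Y.
Proof. by move=> d h; apply: dP d h (perm_refl _). Qed.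
Lemma dPr L (X Y Y' : seq form) : deriv L X Y -> perm_eq Y Y' -> deriv L X Y'.
Proof. by move=> d h; apply: dP d (perm_refl _) h. Qed.

Lemma weak_ab (F : form) : omega_ok F ->
  (forall g f, F = Box g f -> forall L X Y, deriv L X Y -> deriv L (f :: X) Y) ->
  forall L X Y, deriv L X Y -> deriv L (F :: X) Y /\ deriv L X (F :: Y).
Proof.
move=> oF Hsub L X Y; elim=> {X Y}.
- move=> G D G' D' _ [IH1 IH2] pG pD; split.
    by apply: dP IH1 _ (pe_of_Perm pD); rewrite perm_cons; apply: pe_of_Perm.
  by apply: dP IH2 (pe_of_Perm pG) _; rewrite perm_cons; apply: pe_of_Perm.
- move=> q G D; split.
    by apply: dPl (d_id L q (F :: G) D) _; psolve.
  by apply: dPr (d_id L q G (F :: D)) _; psolve.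
- move=> G D; split.
    by apply: dPl (d_bot L (F :: G) D) _; psolve.
  by apply: d_bot.
- move=> G D a1 a2 _ [IH1 IH2] _ [IH3 IH4]; split; first by apply: d_Rand.
  have h1 : deriv L G (a1 :: F :: D) by apply: dPr IH2 _; psolve.
  have h2 : deriv L G (a2 :: F :: D) by apply: dPr IH4 _; psolve.
  by apply: dPr (d_Rand h1 h2) _; psolve.
- move=> G D a1 a2 _ [IH1 IH2]; split; last exact: d_Land.
  have h1 : deriv L (a1 :: a2 :: F :: G) D by apply: dPl IH1 _; psolve.
  by apply: dPl (d_Land h1) _; psolve.
- move=> G D a1 a2 _ [IH1 IH2]; split; first exact: d_Ror.
  have h1 : deriv L G (a1 :: a2 :: F :: D) by apply: dPr IH2 _; psolve.
  by apply: dPr (d_Ror h1) _; psolve.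
- move=> G D a1 a2 _ [IH1 IH2] _ [IH3 IH4]; split; last exact: d_Lor.
  have h1 : deriv L (a1 :: F :: G) D by apply: dPl IH1 _; psolve.
  have h2 : deriv L (a2 :: F :: G) D by apply: dPl IH3 _; psolve.
  by apply: dPl (d_Lor h1 h2) _; psolve.
- move=> G D a1 a2 _ [IH1 IH2]; split.
    have h1 : deriv L (a1 :: F :: G) (a2 :: D) by apply: dPl IH1 _; psolve.
    by apply: dPl (d_Rimp h1) _; psolve.
  have h1 : deriv L (a1 :: G) (a2 :: F :: D) by apply: dPr IH2 _; psolve.
  by apply: dPr (d_Rimp h1) _; psolve.
- move=> G D a1 a2 _ [IH1 IH2] _ [IH3 IH4]; split.
    have h1 : deriv L (a2 :: F :: G) D by apply: dPl IH3 _; psolve.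
    by apply: dPl (d_Limp IH1 h1) _; psolve.
  have h1 : deriv L G (a1 :: F :: D) by apply: dPr IH2 _; psolve.
  by apply: (d_Limp h1 IH4).
- move=> G D a1 _ [IH1 IH2]; split.
    have h1 : deriv L (a1 :: F :: G) D by apply: dPl IH1 _; psolve.
    by apply: dPl (d_Rneg h1) _; psolve.
  by apply: dPr (d_Rneg IH2) _; psolve.
- move=> G D a1 _ [IH1 IH2]; split.
    by apply: dPl (d_Lneg IH1) _; psolve.
  have h1 : deriv L G (a1 :: F :: D) by apply: dPr IH2 _; psolve.
  by apply: dPr (d_Lneg h1) _; psolve.
- move=> boxes G b Sig Om prem _ Hb HS HO; split.
    move: oF Hsub; case: F => //= [q||H f] _ Hsub.
    + by apply: (d_DK (Sig := Var _ q :: Sig)).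
    + by apply: (d_DK (Sig := Bot _ :: Sig)).
    + case sHG: (sval H \subset sval G).
        have h : deriv L (map snd ((H, f) :: boxes)) [:: b] by apply: Hsub prem.
        apply: dPl (d_DK (Sig := Sig) h _ HS HO) _; first by rewrite /= sHG.
        by rewrite /=; psolve.
      by apply: (d_DK (Sig := Box H f :: Sig)) => //=; rewrite sHG.
  apply: dPr (d_DK (Om := F :: Om) prem Hb HS _) _; first by rewrite /= oF.
  psolve.
- move=> a0 Gm Sig Om eL nG prem _ HS HO; split.
    move: oF Hsub; case: F => //= [q||H f] _ Hsub.
    + by apply: (d_DD (Sig := Var _ q :: Sig)).
    + by apply: (d_DD (Sig := Bot _ :: Sig)).
    + case sHa: (sval H == [set a0]).
        have -> : H = sgrp a0 by apply: grp_eq; apply/eqP.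
        have h : deriv L (f :: Gm) [::] by apply: Hsub prem.
        by apply: dPl (d_DD (Sig := Sig) eL _ h HS HO) _ => //=; psolve.
      by apply: (d_DD (Sig := Box H f :: Sig)) => //=; rewrite sHa.
  by apply: (d_DD (Om := F :: Om)) => //=; rewrite oF.
Qed.

Lemma weak_aux n : forall F : form, fsize F <= n ->
  forall L X Y, deriv L X Y -> deriv L (F :: X) Y /\ deriv L X (F :: Y).
Proof.
elim: n => [|n IH] F; first by rewrite leqNgt fsize_gt0.
have wl : forall f, fsize f <= n -> forall L X Y, deriv L X Y -> deriv L (f :: X) Y.
  by move=> f hf L X Y d; case: (IH f hf L X Y d).
have wr : forall f, fsize f <= n -> forall L X Y, deriv L X Y -> deriv L X (f :: Y).
  by move=> f hf L X Y d; case: (IH f hf L X Y d).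
case: F => [q||f1 f2|f1 f2|f1 f2|f1|g f1] /= hs L X Y d.
- by apply: weak_ab.
- by apply: weak_ab.
- have h1 : fsize f1 <= n by lia.
  have h2 : fsize f2 <= n by lia.
  split; first by apply: d_Land; apply: (wl _ h1); apply: (wl _ h2).
  by apply: d_Rand; [apply: (wr _ h1) | apply: (wr _ h2)].
- have h1 : fsize f1 <= n by lia.
  have h2 : fsize f2 <= n by lia.
  split; first by apply: d_Lor; [apply: (wl _ h1) | apply: (wl _ h2)].
  by apply: d_Ror; apply: (wr _ h1); apply: (wr _ h2).
- have h1 : fsize f1 <= n by lia.
  have h2 : fsize f2 <= n by lia.
  split; first by apply: d_Limp; [apply: (wr _ h1) | apply: (wl _ h2)].
  by apply: d_Rimp; apply: (wl _ h1); apply: (wr _ h2).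
- have h1 : fsize f1 <= n by lia.
  split; first by apply: d_Lneg; apply: (wr _ h1).
  by apply: d_Rneg; apply: (wl _ h1).
- apply: weak_ab => // g' f' [_ <-] L' X' Y' d'.
  by apply: wl => //; lia.
Qed.

Lemma wkL L (F : form) X Y : deriv L X Y -> deriv L (F :: X) Y.
Proof. by move=> d; case: (@weak_aux _ F (leqnn _) L X Y d). Qed.
Lemma wkR L (F : form) X Y : deriv L X Y -> deriv L X (F :: Y).
Proof. by move=> d; case: (@weak_aux _ F (leqnn _) L X Y d). Qed.
Lemma wkLs L (Z X Y : seq form) : deriv L X Y -> deriv L (Z ++ X) Y.
Proof. by elim: Z => //= f Z IH d; apply: wkL; apply: IH. Qed.
Lemma wkRs L (Z X Y : seq form) : deriv L X Y -> deriv L X (Z ++ Y).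
Proof. by elim: Z => //= f Z IH d; apply: wkR; apply: IH. Qed.

Ltac pz := apply/permP => z;
  repeat match goal with H : is_true (perm_eq _ _) |- _ =>
    let h := fresh in have h := (elimT permP H z); clear H;
    repeat (rewrite ?count_cat ?cnt_cons ?cnt_nil in h) end;
  cnorm; clear_nonnat; lia.

Lemma test2 (x y : form) l m k : perm_eq l (x :: k) -> perm_eq m (y :: k) -> perm_eq (y :: l) (x :: m).
Proof. move=> h1 h2. pz. Qed.

Lemma perm_cons_cases (x y : form) G X : perm_eq (x :: G) (y :: X) ->
  (x = y /\ perm_eq G X) \/ (exists G', perm_eq G (y :: G') /\ perm_eq X (x :: G')).
Proof.
move=> pe; case: (x =P y) => [e|ne].
  by left; split=> //; move: pe; rewrite e perm_cons.
right; have yG : y \in G.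
  have : y \in x :: G by rewrite (perm_mem pe) mem_head.
  by rewrite in_cons => /orP [/eqP e|//]; case: ne.
exists (rem y G); have h := perm_to_rem yG; split=> //.
have : perm_eq (y :: X) (y :: x :: rem y G) by pz.
by rewrite perm_cons.
Qed.

Definition compound (f : form) : bool :=
  match f with And _ _ | Or _ _ | Imp _ _ | Neg _ => true | _ => false end.

Definition lprem (f : form) : seq (seq form * seq form) :=
  match f with
  | And a b => [:: ([:: a; b], [::])]
  | Or a b => [:: ([:: a], [::]); ([:: b], [::])]
  | Imp a b => [:: ([::], [:: a]); ([:: b], [::])]
  | Neg a => [:: ([::], [:: a])]
  | _ => [::]
  end.

Definition rprem (f : form) : seq (seq form * seq form) :=
  match f with
  | And a b => [:: ([::], [:: a]); ([::], [:: b])]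
  | Or a b => [:: ([::], [:: a; b])]
  | Imp a b => [:: ([:: a], [:: b])]
  | Neg a => [:: ([:: a], [::])]
  | _ => [::]
  end.

Lemma DK_left_nc G boxes Sig (F : form) : all (sigmaK_ok G) Sig ->
  F \in Sig ++ [seq Box x.1 x.2 | x <- boxes] -> ~~ compound F.
Proof.
move=> HS; rewrite mem_cat => /orP [h|/mapP [x _ ->]] //.
by move: (allP HS F h); clear h; case: F.
Qed.

Lemma DD_left_nc c Gm Sig (F : form) : all (sigmaD_ok c) Sig ->
  F \in Sig ++ [seq Box (sgrp c) x | x <- Gm] -> ~~ compound F.
Proof.
move=> HS; rewrite mem_cat => /orP [h|/mapP [x _ ->]] //.
by move: (allP HS F h); clear h; case: F.
Qed.

Lemma om_nc (F : form) Om : all (@omega_ok Ag) Om -> F \in Om -> ~~ compound F.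
Proof. by move=> HO h; move: (allP HO F h); clear h; case: F. Qed.

Lemma invL L X' Y : deriv L X' Y -> forall F X, perm_eq X' (F :: X) -> compound F ->
  forall l r, (l, r) \in lprem F -> deriv L (l ++ X) (r ++ Y).
Proof.
elim=> {X' Y}.
- move=> G D G' D' _ IH pG pD F X pe cF l r lr.
  apply: dPr (IH F X _ cF l r lr) _; last by move/pe_of_Perm: pD => pD; pz.
  by move/pe_of_Perm: pG => pG; pz.
- move=> q G D F X pe cF l r lr.
  case: (perm_cons_cases pe) => [[e _]|[G' [p1 p2]]]; first by rewrite -e in cF.
  apply: dP (d_id L q (l ++ G') (r ++ D)) _ _; pz.
- move=> G D F X pe cF l r lr.
  case: (perm_cons_cases pe) => [[e _]|[G' [p1 p2]]]; first by rewrite -e in cF.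
  apply: dPl (d_bot L (l ++ G') (r ++ D)) _; pz.
- move=> G D a1 a2 _ IH1 _ IH2 F X pe cF l r lr.
  have h1 := IH1 F X pe cF l r lr; have h2 := IH2 F X pe cF l r lr.
  apply: dPr (d_Rand (D := r ++ D) (dPr h1 _) (dPr h2 _)) _; [| |by pz]; by pz.
- move=> G D a1 a2 d IH F X pe cF l r lr.
  case: (perm_cons_cases pe) => [[e p1]|[G' [p1 p2]]].
    move: lr; rewrite -e inE => /eqP [-> ->] /=.
    by apply: dPl d _; pz.
  have h1 := IH F (a1 :: a2 :: G') ltac:(pz) cF l r lr.
  apply: dPl (d_Land (G := l ++ G') (dPl h1 _)) _; [|by pz]; by pz.
- move=> G D a1 a2 _ IH F X pe cF l r lr.
  have h1 := IH F X pe cF l r lr.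
  apply: dPr (d_Ror (D := r ++ D) (dPr h1 _)) _; [|by pz]; by pz.
- move=> G D a1 a2 d1 IH1 d2 IH2 F X pe cF l r lr.
  case: (perm_cons_cases pe) => [[e p1]|[G' [p1 p2]]].
    move: lr; rewrite -e !inE => /orP [] /eqP [-> ->] /=.
      by apply: dPl d1 _; pz.
    by apply: dPl d2 _; pz.
  have h1 := IH1 F (a1 :: G') ltac:(pz) cF l r lr.
  have h2 := IH2 F (a2 :: G') ltac:(pz) cF l r lr.
  apply: dPl (d_Lor (G := l ++ G') (dPl h1 _) (dPl h2 _)) _; [| |by pz]; by pz.
- move=> G D a1 a2 _ IH F X pe cF l r lr.
  have h1 := IH F (a1 :: X) ltac:(pz) cF l r lr.
  apply: dP (d_Rimp (G := l ++ X) (D := r ++ D) (dP h1 _ _)) _ _; [| | |by pz]; by pz.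
- move=> G D a1 a2 d1 IH1 d2 IH2 F X pe cF l r lr.
  case: (perm_cons_cases pe) => [[e p1]|[G' [p1 p2]]].
    move: lr; rewrite -e !inE => /orP [] /eqP [-> ->] /=.
      by apply: dPl d1 _; pz.
    by apply: dPl d2 _; pz.
  have h1 := IH1 F G' ltac:(pz) cF l r lr.
  have h2 := IH2 F (a2 :: G') ltac:(pz) cF l r lr.
  apply: dPl (d_Limp (G := l ++ G') (D := r ++ D) (dPr h1 _) (dPl h2 _)) _; [| |by pz]; by pz.
- move=> G D a1 _ IH F X pe cF l r lr.
  have h1 := IH F (a1 :: X) ltac:(pz) cF l r lr.
  apply: dP (d_Rneg (G := l ++ X) (D := r ++ D) (dPl h1 _)) _ _; [| |by pz]; by pz.
- move=> G D a1 d IH F X pe cF l r lr.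
  case: (perm_cons_cases pe) => [[e p1]|[G' [p1 p2]]].
    move: lr; rewrite -e inE => /eqP [-> ->] /=.
    by apply: dPl d _; pz.
  have h1 := IH F G' ltac:(pz) cF l r lr.
  apply: dPl (d_Lneg (G := l ++ G') (D := r ++ D) (dPr h1 _)) _; [|by pz]; by pz.
- move=> boxes G b Sig Om _ _ _ HS _ F X pe cF.
  have : F \in Sig ++ [seq Box x.1 x.2 | x <- boxes] by rewrite (perm_mem pe) mem_head.
  by move/(DK_left_nc HS); rewrite cF.
- move=> c Gm Sig Om _ _ _ _ HS _ F X pe cF.
  have : F \in Sig ++ [seq Box (sgrp c) x | x <- Gm] by rewrite (perm_mem pe) mem_head.
  by move/(DD_left_nc HS); rewrite cF.
Qed.

Lemma invR L X Y' : deriv L X Y' -> forall F Y, perm_eq Y' (F :: Y) -> compound F ->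
  forall l r, (l, r) \in rprem F -> deriv L (l ++ X) (r ++ Y).
Proof.
elim=> {X Y'}.
- move=> G D G' D' _ IH pG pD F Y pe cF l r lr.
  apply: dPl (IH F Y _ cF l r lr) _; last by move/pe_of_Perm: pG => pG; pz.
  by move/pe_of_Perm: pD => pD; pz.
- move=> q G D F Y pe cF l r lr.
  case: (perm_cons_cases pe) => [[e _]|[D' [p1 p2]]]; first by rewrite -e in cF.
  apply: dP (d_id L q (l ++ G) (r ++ D')) _ _; pz.
- move=> G D F Y pe cF l r lr.
  apply: dPl (d_bot L (l ++ G) (r ++ Y)) _; pz.
- move=> G D a1 a2 d1 IH1 d2 IH2 F Y pe cF l r lr.
  case: (perm_cons_cases pe) => [[e p1]|[D' [p1 p2]]].
    move: lr; rewrite -e !inE => /orP [] /eqP [-> ->] /=.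
      by apply: dPr d1 _; pz.
    by apply: dPr d2 _; pz.
  have h1 := IH1 F (a1 :: D') ltac:(pz) cF l r lr.
  have h2 := IH2 F (a2 :: D') ltac:(pz) cF l r lr.
  apply: dPr (d_Rand (G := l ++ G) (D := r ++ D') (dPr h1 _) (dPr h2 _)) _; [| |by pz]; by pz.
- move=> G D a1 a2 _ IH F Y pe cF l r lr.
  have h1 := IH F Y pe cF l r lr.
  apply: dPl (d_Land (G := l ++ G) (D := r ++ Y) (dPl h1 _)) _; [|by pz]; by pz.
- move=> G D a1 a2 d IH F Y pe cF l r lr.
  case: (perm_cons_cases pe) => [[e p1]|[D' [p1 p2]]].
    move: lr; rewrite -e inE => /eqP [-> ->] /=.
    by apply: dPr d _; pz.
  have h1 := IH F (a1 :: a2 :: D') ltac:(pz) cF l r lr.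
  apply: dPr (d_Ror (G := l ++ G) (D := r ++ D') (dPr h1 _)) _; [|by pz]; by pz.
- move=> G D a1 a2 _ IH1 _ IH2 F Y pe cF l r lr.
  have h1 := IH1 F Y pe cF l r lr; have h2 := IH2 F Y pe cF l r lr.
  apply: dPl (d_Lor (G := l ++ G) (D := r ++ Y) (dPl h1 _) (dPl h2 _)) _; [| |by pz]; by pz.
- move=> G D a1 a2 d IH F Y pe cF l r lr.
  case: (perm_cons_cases pe) => [[e p1]|[D' [p1 p2]]].
    move: lr; rewrite -e inE => /eqP [-> ->] /=.
    by apply: dPr d _; pz.
  have h1 := IH F (a2 :: D') ltac:(pz) cF l r lr.
  apply: dPr (d_Rimp (G := l ++ G) (D := r ++ D') (dP h1 _ _)) _; [| |by pz]; by pz.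
- move=> G D a1 a2 _ IH1 _ IH2 F Y pe cF l r lr.
  have h1 := IH1 F (a1 :: Y) ltac:(pz) cF l r lr.
  have h2 := IH2 F Y pe cF l r lr.
  apply: dPl (d_Limp (G := l ++ G) (D := r ++ Y) (dPr h1 _) (dPl h2 _)) _; [| |by pz]; by pz.
- move=> G D a1 d IH F Y pe cF l r lr.
  case: (perm_cons_cases pe) => [[e p1]|[D' [p1 p2]]].
    move: lr; rewrite -e inE => /eqP [-> ->] /=.
    by apply: dP d _ _; pz.
  have h1 := IH F D' ltac:(pz) cF l r lr.
  apply: dPr (d_Rneg (G := l ++ G) (D := r ++ D') (dPl h1 _)) _; [|by pz]; by pz.
- move=> G D a1 _ IH F Y pe cF l r lr.
  have h1 := IH F (a1 :: Y) ltac:(pz) cF l r lr.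
  apply: dPl (d_Lneg (G := l ++ G) (D := r ++ Y) (dPr h1 _)) _; [|by pz]; by pz.
- move=> boxes G b Sig Om _ _ _ _ HO F Y pe cF.
  have : F \in Box G b :: Om by rewrite (perm_mem pe) mem_head.
  rewrite in_cons => /orP [/eqP e|/(om_nc HO)]; first by rewrite e in cF.
  by rewrite cF.
- move=> c Gm Sig Om _ _ _ _ _ HO F Y pe cF.
  have : F \in Om by rewrite (perm_mem pe) mem_head.
  by move/(om_nc HO); rewrite cF.
Qed.

Lemma mem_varsl q (s : seq form) : (q \in varsl s) = has (fun f => q \in vars f) s.
Proof. by elim: s => //= f s IH; rewrite /varsl /= mem_cat -IH. Qed.

Lemma in_agtsl x (s : seq form) : (x \in agtsl s) = has (fun f => x \in agts f) s.
Proof.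
elim: s => [|f s IH]; first by rewrite /agtsl big_nil in_set0.
by rewrite /agtsl big_cons in_setU /= -IH.
Qed.

Lemma varsl_cat (s t : seq form) : varsl (s ++ t) = varsl s ++ varsl t.
Proof. by rewrite /varsl map_cat flatten_cat. Qed.

Lemma agtsl_cat (s t : seq form) : agtsl (s ++ t) = agtsl s :|: agtsl t.
Proof. by rewrite /agtsl big_cat. Qed.

Lemma agtsl_cons (f : form) s : agtsl (f :: s) = agts f :|: agtsl s.
Proof. by rewrite /agtsl big_cons. Qed.

Definition msize (s : seq form) := sumn (map fsize s).

Lemma msize_perm (s t : seq form) : perm_eq s t -> msize s = msize t.
Proof. by move=> h; apply: perm_sumn; apply: perm_map. Qed.

Lemma msize_cat (s t : seq form) : msize (s ++ t) = msize s + msize t.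
Proof. by rewrite /msize map_cat sumn_cat. Qed.

Definition pb (G : grp Ag) (f : form) : option (grp Ag * form) :=
  match f with
  | Box H g => if sval H \subset sval G then Some (H, g) else None
  | _ => None
  end.

Definition ubx (G : grp Ag) (l : seq form) : seq form := map snd (pmap (pb G) l).
Definition nb (G : grp Ag) (l : seq form) : seq form := [seq f <- l | pb G f == None].

Local Notation boxify := (fun x : grp Ag * form => Box x.1 x.2).

Lemma split_pb (G : grp Ag) (l : seq form) :
  perm_eq l (nb G l ++ map boxify (pmap (pb G) l)).
Proof.
elim: l => //= f l IH.
case: f => /= [q||f1 f2|f1 f2|f1 f2|f1|H f1]; try by rewrite perm_cons.
case: (sval H \subset sval G) => /=; last by rewrite perm_cons.
apply: perm_trans (_ : perm_eq _ (Box H f1 :: nb G l ++ map boxify (pmap (pb G) l))) _.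
  by rewrite perm_cons.
pz.
Qed.

Lemma pb_DK (G : grp Ag) Sig boxes : all (sigmaK_ok G) Sig ->
  all (fun x : grp Ag * form => sval x.1 \subset sval G) boxes ->
  pmap (pb G) (Sig ++ map boxify boxes) = boxes.
Proof.
move=> HS Hb; rewrite pmap_cat.
have -> : pmap (pb G) Sig = [::].
  elim: Sig HS => //= f Sig IH /andP [h1 h2]; rewrite IH //.
  by case: f h1 => //= H f /negbTE ->.
elim: boxes Hb => //= [[H f] boxes] IH /andP [/= h1 h2].
by rewrite h1 /= IH.
Qed.

Lemma pb_sub (G : grp Ag) (l : seq form) : all (fun x : grp Ag * form => sval x.1 \subset sval G) (pmap (pb G) l).
Proof.
elim: l => //= f l IH; case: f => //= H f.
by case h: (sval H \subset sval G) => //=; rewrite h.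
Qed.

Lemma nb_sigmaK (G : grp Ag) Sig boxes (Y : seq form) : all (sigmaK_ok G) Sig ->
  {subset Y <= Sig ++ map boxify boxes} ->
  all (fun x : grp Ag * form => sval x.1 \subset sval G) boxes ->
  all (sigmaK_ok G) (nb G Y).
Proof.
move=> HS sub Hb; apply/allP => f; rewrite mem_filter => /andP [/eqP hf /sub].
rewrite mem_cat => /orP [/(allP HS)//|/mapP [[H g] hx ef]].
by move: hf; rewrite ef /= (allP Hb _ hx).
Qed.

Definition pbD (c : Ag) (f : form) : option form :=
  match f with
  | Box H g => if sval H == [set c] then Some g else None
  | _ => None
  end.
Definition nbD c (l : seq form) : seq form := [seq f <- l | pbD c f == None].

Lemma split_pbD c (l : seq form) :
  perm_eq l (nbD c l ++ map (Box (sgrp c)) (pmap (pbD c) l)).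
Proof.
elim: l => //= f l IH.
case: f => /= [q||f1 f2|f1 f2|f1 f2|f1|H f1]; try by rewrite perm_cons.
case e: (sval H == [set c]) => /=; last by rewrite perm_cons.
have -> : H = sgrp c by apply: grp_eq; apply/eqP.
apply: perm_trans (_ : perm_eq _ (Box (sgrp c) f1 :: nbD c l ++ map (Box (sgrp c)) (pmap (pbD c) l))) _.
  by rewrite perm_cons.
pz.
Qed.

Lemma pbD_DD c Sig Gm0 : all (sigmaD_ok c) Sig ->
  pmap (pbD c) (Sig ++ map (Box (sgrp c)) Gm0) = Gm0.
Proof.
move=> HS; rewrite pmap_cat.
have -> : pmap (pbD c) Sig = [::].
  elim: Sig HS => //= f Sig IH /andP [h1 h2]; rewrite IH //.
  by case: f h1 => //= H f /negbTE ->.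
by elim: Gm0 => //= f Gm0 ->; rewrite eqxx.
Qed.

Lemma nbD_sigmaD c Sig Gm0 (Y : seq form) : all (sigmaD_ok c) Sig ->
  {subset Y <= Sig ++ map (Box (sgrp c)) Gm0} ->
  all (sigmaD_ok c) (nbD c Y).
Proof.
move=> HS sub; apply/allP => f; rewrite mem_filter => /andP [/eqP hf /sub].
rewrite mem_cat => /orP [/(allP HS)//|/mapP [g hx ef]].
by move: hf; rewrite ef /= eqxx.
Qed.

Lemma grp_ne0 (g : grp Ag) : sval g != set0.
Proof. exact: (svalP g). Qed.

Lemma ubx_sgrp c (l : seq form) : ubx (sgrp c) l = pmap (pbD c) l.
Proof.
elim: l => //= f l IH; case: f => // H g /=.
rewrite /ubx /=.
have -> : (sval H \subset [set c]) = (sval H == [set c]).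
  apply/idP/idP => [|/eqP ->//]; rewrite subset1 => /orP [//|/eqP e].
  by move: (grp_ne0 H); rewrite e eqxx.
by case: (sval H == [set c]) => //=; rewrite -IH.
Qed.

Fixpoint bigOr (l : seq form) : form :=
  match l with [::] => Bot _ | f :: l => Or f (bigOr l) end.

Lemma bigOr_L L (l : seq form) X Y :
  (forall x, x \in l -> deriv L (x :: X) Y) -> deriv L (bigOr l :: X) Y.
Proof.
elim: l => [|f l IH] h /=; first exact: d_bot.
apply: d_Lor; first by apply: h; rewrite mem_head.
by apply: IH => x hx; apply: h; rewrite in_cons hx orbT.
Qed.

Lemma bigOr_R L (l : seq form) x X Y :
  x \in l -> deriv L X (x :: Y) -> deriv L X (bigOr l :: Y).
Proof.
elim: l => [//|f l IH]; rewrite in_cons => /orP [/eqP <-|hx] d /=.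
  by apply: d_Ror; apply: dPr (wkR (bigOr l) d) _; pz.
apply: d_Ror; apply: wkR; exact: IH.
Qed.

Lemma lrule L (P : form) X Y : compound P ->
  (forall l r, (l, r) \in lprem P -> deriv L (l ++ X) (r ++ Y)) -> deriv L (P :: X) Y.
Proof.
case: P => //= [f1 f2|f1 f2|f1 f2|f1] _ h.
- by apply: d_Land; apply: (h [:: f1; f2] [::]); rewrite inE.
- by apply: d_Lor; [apply: (h [:: f1] [::]) | apply: (h [:: f2] [::])]; rewrite !inE eqxx ?orbT.
- by apply: d_Limp; [apply: (h [::] [:: f1]) | apply: (h [:: f2] [::])]; rewrite !inE eqxx ?orbT.
- by apply: d_Lneg; apply: (h [::] [:: f1]); rewrite inE.
Qed.

Lemma rrule L (P : form) X Y : compound P ->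
  (forall l r, (l, r) \in rprem P -> deriv L (l ++ X) (r ++ Y)) -> deriv L X (P :: Y).
Proof.
case: P => //= [f1 f2|f1 f2|f1 f2|f1] _ h.
- by apply: d_Rand; [apply: (h [::] [:: f1]) | apply: (h [::] [:: f2])]; rewrite !inE eqxx ?orbT.
- by apply: d_Ror; apply: (h [::] [:: f1; f2]); rewrite inE.
- by apply: d_Rimp; apply: (h [:: f1] [:: f2]); rewrite inE.
- by apply: d_Rneg; apply: (h [:: f1] [::]); rewrite inE.
Qed.

Fixpoint pickc (l : seq form) : option (form * seq form) :=
  match l with
  | [::] => None
  | f :: l' => if compound f then Some (f, l')
               else if pickc l' is Some (g, r) then Some (g, f :: r) else None
  end.

Lemma pickc_some l f r : pickc l = Some (f, r) -> perm_eq l (f :: r) /\ compound f.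
Proof.
elim: l f r => //= g l IH f r.
case cg: (compound g); first by case=> <- <-.
case e: (pickc l) => [[h r']|] //; case=> <- <-.
have [p1 c1] := IH _ _ e; split=> //; pz.
Qed.

Lemma pickc_none l : pickc l = None -> all (@omega_ok Ag) l.
Proof.
elim: l => //= g l IH.
case cg: (compound g); first by [].
case e: (pickc l) => [[h r']|] // _; rewrite IH // andbT.
by case: g cg.
Qed.

Definition atomsL (l : seq form) : seq nat :=
  pmap (fun f : form => if f is Var q then Some q else None) l.

Lemma mem_atomsL q (l : seq form) : (q \in atomsL l) = (Var _ q \in l).
Proof.
elim: l => //= f l IH; rewrite in_cons -IH.
by case: f => //= [q'|||||]; rewrite in_cons.
Qed.

Definition grps : seq (grp Ag) := pmap insub (enum {set Ag}).

Lemma mem_grps g : g \in grps.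
Proof. by rewrite /grps mem_pmap_sub mem_enum. Qed.

Definition Top : form := Neg (Bot _).

Variables (L : logic) (p : nat) (a : Ag).

Definition fresh (f : form) : bool := (p \notin vars f) && (a \notin agts f).

Lemma fresh_all (s : seq form) : (p \notin varsl s) && (a \notin agtsl s) = all fresh s.
Proof.
rewrite mem_varsl in_agtsl; elim: s => //= f s <-.
by rewrite /fresh !negb_or; case: (p \in vars f); case: (a \in agts f); case: (has _ s); case: (has _ s).
Qed.

Definition inctx (X : seq form) (F : form) : bool :=
  all (fun q => (q \in varsl X) && (q != p)) (vars F) && (agts F \subset agtsl X :\ a).

Definition disj (J : seq form -> seq form -> form) (Gm Dl : seq form) : seq form :=
  [seq Neg (Var _ q) | q <- atomsL Gm & q != p] ++
  [seq Var _ q | q <- atomsL Dl & q != p] ++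
  [seq Neg (Box g (Neg (J (ubx g Gm) [::]))) | g : grp Ag <- grps & sval g \subset agtsl Gm :\ a] ++
  pmap (fun f => match f with
                 | Box G b => if (insub (sval G :\ a) : option (grp Ag)) is Some g'
                              then Some (Box g' (J (ubx G Gm) [:: b])) else None
                 | _ => None end) Dl.

Definition lstep (J : seq form -> seq form -> form) (f : form) (r Dl : seq form) : form :=
  match f with
  | And B C => J (B :: C :: r) Dl
  | Or B C => And (J (B :: r) Dl) (J (C :: r) Dl)
  | Imp B C => And (J r (B :: Dl)) (J (C :: r) Dl)
  | Neg B => J r (B :: Dl)
  | _ => Bot _
  end.

Definition rstep (J : seq form -> seq form -> form) (Gm : seq form) (f : form) (r : seq form) : form :=
  match f with
  | And B C => And (J Gm (B :: r)) (J Gm (C :: r))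
  | Or B C => J Gm (B :: C :: r)
  | Imp B C => J (B :: Gm) (C :: r)
  | Neg B => J (B :: Gm) r
  | _ => Bot _
  end.

Fixpoint itp (n : nat) (Gm Dl : seq form) : form :=
  match n with
  | 0 => Bot _
  | n'.+1 =>
    match pickc Gm with
    | Some (f, r) => lstep (itp n') f r Dl
    | None =>
      match pickc Dl with
      | Some (f, r) => rstep (itp n') Gm f r
      | None => if excluded_middle_informative (deriv L Gm Dl) then Top
                else bigOr (disj (itp n') Gm Dl)
      end
    end
  end.

Definition good (Gm Dl : seq form) (F : form) : Prop :=
  [/\ inctx (Gm ++ Dl) F, deriv L (Gm ++ [:: F]) Dl &
      forall Pi Lm, all fresh (Pi ++ Lm) -> deriv L (Pi ++ Gm) (Dl ++ Lm) -> deriv L Pi (F :: Lm)].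

Lemma msize_cons (f : form) s : msize (f :: s) = fsize f + msize s. Proof. by []. Qed.

Lemma inctx_bin X (A B : form) : inctx X A -> inctx X B ->
  [/\ inctx X (And A B), inctx X (Or A B) & inctx X (Imp A B)].
Proof.
by move=> /andP [h1 h2] /andP [h3 h4]; rewrite /inctx /= all_cat subUset h1 h2 h3 h4.
Qed.

Lemma inctx_Neg X (A : form) : inctx X A -> inctx X (Neg A).
Proof. by []. Qed.

Lemma inctx_Box X (g : grp Ag) (A : form) : sval g \subset agtsl X :\ a -> inctx X A -> inctx X (Box g A).
Proof. by move=> h /andP [h1 h2]; rewrite /inctx /= subUset h h1 h2. Qed.

Lemma inctx_Top X : inctx X Top.
Proof. by rewrite /inctx /= sub0set. Qed.

Lemma inctx_Var X q : q \in varsl X -> q != p -> inctx X (Var _ q).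
Proof. by move=> h1 h2; rewrite /inctx /= h1 h2 sub0set. Qed.

Lemma inctx_bigOr X l : (forall x, x \in l -> inctx X x) -> inctx X (bigOr l).
Proof.
elim: l => [|f l IH] h /=; first by rewrite /inctx /= sub0set.
have [h1 _ _] := inctx_bin (h f (mem_head _ _)) (IH (fun x hx => h x ltac:(by rewrite in_cons hx orbT))).
exact: h1.
Qed.

Definition ctx_sub (Y X : seq form) := {subset varsl Y <= varsl X} /\ agtsl Y \subset agtsl X.

Lemma inctx_mono Y X F : ctx_sub Y X -> inctx Y F -> inctx X F.
Proof.
move=> [sv sa] /andP [h1 h2]; apply/andP; split.
  apply/allP => q /(allP h1) /andP [hq ->]; by rewrite sv.
apply: subset_trans h2 _; apply/subsetP => x; rewrite !in_setD1 => /andP [-> /(subsetP sa)].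
by [].
Qed.

Ltac bimp := let h := fresh in move=> h; repeat (case/orP: h => h); rewrite ?h ?orbT ?orTb //.

Ltac csub := rewrite /ctx_sub; split;
  [ let q := fresh in move=> q; rewrite !mem_varsl
  | apply/subsetP => ?; rewrite !in_agtsl ];
  rewrite /= ?has_cat /=;
  repeat match goal with H : is_true (perm_eq ?s _) |- context [has _ ?s] =>
    rewrite (perm_has _ H) end;
  rewrite /= ?has_cat /= ?mem_cat ?in_setU; bimp.

Lemma lstep_good J Gm Dl f r :
  perm_eq Gm (f :: r) -> compound f ->
  (forall Gm' Dl', msize Gm' + msize Dl' < msize Gm + msize Dl -> good Gm' Dl' (J Gm' Dl')) ->
  good Gm Dl (lstep J f r Dl).
Proof.
move=> pG cf IH; have ms := msize_perm pG.
case: f pG cf ms => //= [B C|B C|B C|B] pG _ ms.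
- have [i1 d1 e1] := IH (B :: C :: r) Dl ltac:(rewrite ms !msize_cons /=; lia).
  split.
  + apply: (inctx_mono _ i1); csub.
  + by apply: dPl (d_Land (G := r ++ [:: J (B :: C :: r) Dl]) d1) _; pz.
  + move=> Pi Lm fr d; apply: e1 => //.
    have := invL d (F := And B C) (X := Pi ++ r) ltac:(pz) is_true_true (l := [:: B; C]) (r := [::]) ltac:(by rewrite inE).
    by move=> d'; apply: dPl d' _; pz.
- have [i1 d1 e1] := IH (B :: r) Dl ltac:(rewrite ms !msize_cons /=; lia).
  have [i2 d2 e2] := IH (C :: r) Dl ltac:(rewrite ms !msize_cons /=; lia).
  split.
  + have c1 : ctx_sub ((B :: r) ++ Dl) (Gm ++ Dl) by csub.
    have c2 : ctx_sub ((C :: r) ++ Dl) (Gm ++ Dl) by csub.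
    by have [h _ _] := inctx_bin (inctx_mono c1 i1) (inctx_mono c2 i2).
  + apply: dPl (d_Land (G := Gm) _) _; last by pz.
    apply: dPl (d_Lor (G := J (B :: r) Dl :: J (C :: r) Dl :: r) _ _) _; last by pz.
      by apply: dPl (wkL (J (C :: r) Dl) d1) _; pz.
    by apply: dPl (wkL (J (B :: r) Dl) d2) _; pz.
  + move=> Pi Lm fr d; apply: d_Rand.
      apply: e1 => //.
      have := invL d (F := Or B C) (X := Pi ++ r) ltac:(pz) is_true_true (l := [:: B]) (r := [::]) ltac:(by rewrite inE eqxx).
      by move=> d'; apply: dPl d' _; pz.
    apply: e2 => //.
    have := invL d (F := Or B C) (X := Pi ++ r) ltac:(pz) is_true_true (l := [:: C]) (r := [::]) ltac:(by rewrite !inE eqxx orbT).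
    by move=> d'; apply: dPl d' _; pz.
- have [i1 d1 e1] := IH r (B :: Dl) ltac:(rewrite ms !msize_cons /=; lia).
  have [i2 d2 e2] := IH (C :: r) Dl ltac:(rewrite ms !msize_cons /=; lia).
  split.
  + have c1 : ctx_sub (r ++ B :: Dl) (Gm ++ Dl) by csub.
    have c2 : ctx_sub ((C :: r) ++ Dl) (Gm ++ Dl) by csub.
    by have [h _ _] := inctx_bin (inctx_mono c1 i1) (inctx_mono c2 i2).
  + apply: dPl (d_Land (G := Gm) _) _; last by pz.
    apply: dPl (d_Limp (G := J r (B :: Dl) :: J (C :: r) Dl :: r) _ _) _; last by pz.
      by apply: dPl (wkL (J (C :: r) Dl) d1) _; pz.
    by apply: dPl (wkL (J r (B :: Dl)) d2) _; pz.
  + move=> Pi Lm fr d; apply: d_Rand.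
      apply: e1 => //.
      have := invL d (F := Imp B C) (X := Pi ++ r) ltac:(pz) is_true_true (l := [::]) (r := [:: B]) ltac:(by rewrite inE eqxx).
      by move=> d'; apply: dP d' _ _; pz.
    apply: e2 => //.
    have := invL d (F := Imp B C) (X := Pi ++ r) ltac:(pz) is_true_true (l := [:: C]) (r := [::]) ltac:(by rewrite !inE eqxx orbT).
    by move=> d'; apply: dPl d' _; pz.
- have [i1 d1 e1] := IH r (B :: Dl) ltac:(rewrite ms !msize_cons /=; lia).
  split.
  + apply: (inctx_mono _ i1); csub.
  + by apply: dPl (d_Lneg (G := r ++ [:: J r (B :: Dl)]) d1) _; pz.
  + move=> Pi Lm fr d; apply: e1 => //.
    have := invL d (F := Neg B) (X := Pi ++ r) ltac:(pz) is_true_true (l := [::]) (r := [:: B]) ltac:(by rewrite inE).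
    by move=> d'; apply: dP d' _ _; pz.
Qed.

Lemma rstep_good J Gm Dl f r :
  perm_eq Dl (f :: r) -> compound f ->
  (forall Gm' Dl', msize Gm' + msize Dl' < msize Gm + msize Dl -> good Gm' Dl' (J Gm' Dl')) ->
  good Gm Dl (rstep J Gm f r).
Proof.
move=> pD cf IH; have ms := msize_perm pD.
case: f pD cf ms => //= [B C|B C|B C|B] pD _ ms.
- have [i1 d1 e1] := IH Gm (B :: r) ltac:(rewrite ms !msize_cons /=; lia).
  have [i2 d2 e2] := IH Gm (C :: r) ltac:(rewrite ms !msize_cons /=; lia).
  split.
  + have c1 : ctx_sub (Gm ++ B :: r) (Gm ++ Dl) by csub.
    have c2 : ctx_sub (Gm ++ C :: r) (Gm ++ Dl) by csub.
    by have [h _ _] := inctx_bin (inctx_mono c1 i1) (inctx_mono c2 i2).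
  + apply: dPl (d_Land (G := Gm) (a1 := J Gm (B :: r)) (a2 := J Gm (C :: r)) _) _; last by pz.
    apply: dPr (d_Rand (G := J Gm (B :: r) :: J Gm (C :: r) :: Gm) (D := r) _ _) _; last by pz.
      by apply: dPl (wkL (J Gm (C :: r)) d1) _; pz.
    by apply: dPl (wkL (J Gm (B :: r)) d2) _; pz.
  + move=> Pi Lm fr d; apply: d_Rand.
      apply: e1 => //.
      have := invR d (F := And B C) (Y := r ++ Lm) ltac:(pz) is_true_true (l := [::]) (r := [:: B]) ltac:(by rewrite inE eqxx).
      by move=> d'; apply: dPr d' _; pz.
    apply: e2 => //.
    have := invR d (F := And B C) (Y := r ++ Lm) ltac:(pz) is_true_true (l := [::]) (r := [:: C]) ltac:(by rewrite !inE eqxx orbT).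
    by move=> d'; apply: dPr d' _; pz.
- have [i1 d1 e1] := IH Gm (B :: C :: r) ltac:(rewrite ms !msize_cons /=; lia).
  split.
  + have c1 : ctx_sub (Gm ++ B :: C :: r) (Gm ++ Dl) by csub.
    exact: inctx_mono c1 i1.
  + by apply: dPr (d_Ror (D := r) d1) _; pz.
  + move=> Pi Lm fr d; apply: e1 => //.
    have := invR d (F := Or B C) (Y := r ++ Lm) ltac:(pz) is_true_true (l := [::]) (r := [:: B; C]) ltac:(by rewrite inE).
    by move=> d'; apply: dPr d' _; pz.
- have [i1 d1 e1] := IH (B :: Gm) (C :: r) ltac:(rewrite ms !msize_cons /=; lia).
  split.
  + have c1 : ctx_sub ((B :: Gm) ++ C :: r) (Gm ++ Dl) by csub.
    exact: inctx_mono c1 i1.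
  + by apply: dPr (d_Rimp (G := Gm ++ [:: J (B :: Gm) (C :: r)]) (D := r) d1) _; pz.
  + move=> Pi Lm fr d; apply: e1 => //.
    have := invR d (F := Imp B C) (Y := r ++ Lm) ltac:(pz) is_true_true (l := [:: B]) (r := [:: C]) ltac:(by rewrite inE).
    by move=> d'; apply: dP d' _ _; pz.
- have [i1 d1 e1] := IH (B :: Gm) r ltac:(rewrite ms !msize_cons /=; lia).
  split.
  + have c1 : ctx_sub ((B :: Gm) ++ r) (Gm ++ Dl) by csub.
    exact: inctx_mono c1 i1.
  + by apply: dPr (d_Rneg (G := Gm ++ [:: J (B :: Gm) r]) (D := r) d1) _; pz.
  + move=> Pi Lm fr d; apply: e1 => //.
    have := invR d (F := Neg B) (Y := r ++ Lm) ltac:(pz) is_true_true (l := [:: B]) (r := [::]) ltac:(by rewrite inE).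
    by move=> d'; apply: dP d' _ _; pz.
Qed.

Lemma fresh_Box (g : grp Ag) (f : form) : fresh (Box g f) = (a \notin sval g) && fresh f.
Proof. by rewrite /fresh /= in_setU negb_or; case: (p \in vars f); case: (a \in sval g); case: (a \in agts f). Qed.

Lemma fresh_bin (f1 f2 : form) :
  [/\ fresh (And f1 f2) = fresh f1 && fresh f2, fresh (Or f1 f2) = fresh f1 && fresh f2
    & fresh (Imp f1 f2) = fresh f1 && fresh f2].
Proof.
rewrite /fresh /= !mem_cat !in_setU !negb_or.
by split; case: (p \in vars f1); case: (p \in vars f2); case: (a \in agts f1); case: (a \in agts f2).
Qed.

Lemma fresh_lprem (P : form) l r : (l, r) \in lprem P -> fresh P -> all fresh (l ++ r).
Proof.
case: P => //= [f1 f2|f1 f2|f1 f2|f1]; rewrite ?inE; try have [e1 e2 e3] := fresh_bin f1 f2.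
- by rewrite e1 => /eqP [-> ->] /andP [h1 h2]; rewrite /= h1 h2.
- by rewrite e2 => /orP [] /eqP [-> ->] /andP [h1 h2]; rewrite /= ?h1 ?h2.
- by rewrite e3 => /orP [] /eqP [-> ->] /andP [h1 h2]; rewrite /= ?h1 ?h2.
- by move=> /eqP [-> ->] h1; rewrite /= andbT; exact: h1.
Qed.

Lemma fresh_rprem (P : form) l r : (l, r) \in rprem P -> fresh P -> all fresh (l ++ r).
Proof.
case: P => //= [f1 f2|f1 f2|f1 f2|f1]; rewrite ?inE; try have [e1 e2 e3] := fresh_bin f1 f2.
- by rewrite e1 => /orP [] /eqP [-> ->] /andP [h1 h2]; rewrite /= ?h1 ?h2.
- by rewrite e2 => /eqP [-> ->] /andP [h1 h2]; rewrite /= h1 h2.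
- by rewrite e3 => /eqP [-> ->] /andP [h1 h2]; rewrite /= h1 h2.
- by move=> /eqP [-> ->] h1; rewrite /= andbT; exact: h1.
Qed.

Lemma fresh_ubx (G : grp Ag) l : all fresh l -> all fresh (ubx G l).
Proof.
elim: l => //= f l IH /andP [h1 h2]; move: (IH h2); rewrite /ubx.
case: f h1 => //= H f; case: (sval H \subset sval G) => //=.
by rewrite fresh_Box => /andP [_ ->] ->.
Qed.

Lemma fresh_pbD c l : all fresh l -> all fresh (pmap (pbD c) l).
Proof.
elim: l => //= f l IH /andP [h1 h2]; move: (IH h2).
case: f h1 => //= H f; case: (sval H == [set c]) => //=.
by rewrite fresh_Box => /andP [_ ->] ->.
Qed.

Lemma box_agts (H : grp Ag) (f : form) l : Box H f \in l -> sval H \subset agtsl l.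
Proof.
move=> hl; apply/subsetP => x hx; rewrite in_agtsl; apply/hasP; exists (Box H f) => //=.
by rewrite in_setU hx.
Qed.

Lemma pb_fresh_eq (g' G : grp Ag) l : all fresh l -> sval g' = sval G :\ a ->
  {in l, pb g' =1 pb G}.
Proof.
move=> fr e f hf; move: (allP fr f hf); case: f hf => //= H f _.
rewrite fresh_Box => /andP [aH _]; rewrite e.
congr (if _ then _ else _); apply/idP/idP => [h|sHG]; first exact: subset_trans h (subD1set _ _).
apply/subsetP => x hx; rewrite in_setD1 (subsetP sHG _ hx) andbT.
by apply/eqP => exa; move: aH; rewrite -exa hx.
Qed.

Lemma pb_empty_a (G : grp Ag) l : all fresh l -> sval G :\ a = set0 -> pmap (pb G) l = [::].
Proof.
move=> fr e; elim: l fr => //= f l IH /andP [h1 h2]; rewrite IH //.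
case: f h1 => //= H f; rewrite fresh_Box => /andP [aH _].
case sHG: (sval H \subset sval G) => //.
have /set0Pn [x hx] := grp_ne0 H.
have : x \in sval G :\ a by rewrite in_setD1 (subsetP sHG _ hx) andbT; apply/eqP => exa; move: aH; rewrite -exa hx.
by rewrite e in_set0.
Qed.

Lemma pbD_empty_a l : all fresh l -> pmap (pbD a) l = [::].
Proof.
elim: l => //= f l IH /andP [h1 h2]; rewrite IH //.
case: f h1 => //= H f; rewrite fresh_Box => /andP [aH _].
by case e: (sval H == [set a]) => //; move: aH; rewrite (eqP e) set11.
Qed.

Lemma sigmaK_mono (g' G : grp Ag) (f : form) : sval g' \subset sval G -> sigmaK_ok G f -> sigmaK_ok g' f.
Proof.
move=> s; case: f => //= H f; apply: contra => h; exact: subset_trans h s.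
Qed.

Lemma nb_omega (G : grp Ag) l : all (@omega_ok Ag) l -> all (sigmaK_ok G) (nb G l).
Proof.
elim: l => //= f l IH /andP [h1 h2]; case: f h1 => //= [q||H f] _; rewrite ?IH //.
by case e: (sval H \subset sval G) => //=; rewrite ?e /= IH.
Qed.

Lemma nbD_omega c l : all (@omega_ok Ag) l -> all (sigmaD_ok c) (nbD c l).
Proof.
elim: l => //= f l IH /andP [h1 h2]; case: f h1 => //= [q||H f] _; rewrite ?IH //.
by case e: (sval H == [set c]) => //=; rewrite ?e /= IH.
Qed.

Lemma msize_ubx (G : grp Ag) l : msize (ubx G l) + size l <= msize l.
Proof.
elim: l => //= f l IH; rewrite /ubx /=; case: f => /= [q||f1 f2|f1 f2|f1 f2|f1|H f1];
  rewrite ?msize_cons /=; try (move: IH; rewrite /ubx; lia).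
case: (sval H \subset sval G) => /=; rewrite ?msize_cons /=; move: IH; rewrite /ubx; lia.
Qed.

Lemma msize_mem (f : form) l : f \in l -> fsize f <= msize l.
Proof.
elim: l => //= g l IH; rewrite in_cons msize_cons => /orP [/eqP ->|/IH]; lia.
Qed.

Lemma ctx_sub_cat A B X : ctx_sub A X -> ctx_sub B X -> ctx_sub (A ++ B) X.
Proof.
move=> [v1 a1] [v2 a2]; split.
  by move=> q; rewrite varsl_cat mem_cat => /orP [/v1|/v2].
by rewrite agtsl_cat subUset a1 a2.
Qed.

Lemma ctx_sub_catl A B : ctx_sub A (A ++ B).
Proof. by split; [move=> q; rewrite varsl_cat mem_cat => ->|rewrite agtsl_cat subsetUl]. Qed.

Lemma ctx_sub_catr A B : ctx_sub B (A ++ B).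
Proof. by split; [move=> q; rewrite varsl_cat mem_cat => ->; rewrite orbT|rewrite agtsl_cat subsetUr]. Qed.

Lemma ctx_sub_trans A B C : ctx_sub A B -> ctx_sub B C -> ctx_sub A C.
Proof. by move=> [v1 a1] [v2 a2]; split; [move=> q /v1 /v2|apply: subset_trans a1 a2]. Qed.

Lemma ctx_sub_nil X : ctx_sub [::] X.
Proof. by split=> //; rewrite /agtsl big_nil sub0set. Qed.

Lemma ctx_sub_ubx (G : grp Ag) l : ctx_sub (ubx G l) l.
Proof.
elim: l => [|f l [v a']]; first exact: ctx_sub_nil.
rewrite /ubx /=; have sub : ctx_sub (ubx G l) (f :: l).
  apply: ctx_sub_trans (ctx_sub_catr [:: f] l); by split.
case: f sub => // H g sub; rewrite /=; case: (sval H \subset sval G) => //=.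
apply: (@ctx_sub_cat [:: g] (ubx G l)) => //; split.
  by move=> q; rewrite /varsl /= !mem_cat => /orP [->//|//].
by rewrite /agtsl !big_cons big_nil setU0; apply/subsetP => x hx; rewrite !in_setU hx orbT.
Qed.

Lemma ctx_sub_box (G : grp Ag) b l : Box G b \in l -> ctx_sub [:: b] l.
Proof.
move=> hl; split.
  by move=> q; rewrite /varsl /= cats0 => hq; rewrite mem_varsl; apply/hasP; exists (Box G b).
rewrite /agtsl big_cons big_nil setU0; apply/subsetP => x hx.
by rewrite in_agtsl; apply/hasP; exists (Box G b) => //=; rewrite in_setU hx orbT.
Qed.

Section Irr.
Variables (J : seq form -> seq form -> form) (Gm Dl : seq form).
Hypotheses (hG : all (@omega_ok Ag) Gm) (hD : all (@omega_ok Ag) Dl) (nGD : ~ deriv L Gm Dl).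
Hypothesis IHg : forall g : grp Ag, sval g \subset agtsl Gm :\ a -> good (ubx g Gm) [::] (J (ubx g Gm) [::]).
Hypothesis IHb : forall (G : grp Ag) b, Box G b \in Dl -> good (ubx G Gm) [:: b] (J (ubx G Gm) [:: b]).

Lemma md1 q : Var _ q \in Gm -> q != p -> Neg (Var _ q) \in disj J Gm Dl.
Proof.
move=> h hq; rewrite /disj mem_cat; apply/orP; left; apply/mapP; exists q => //.
by rewrite mem_filter hq mem_atomsL h.
Qed.

Lemma md2 q : Var _ q \in Dl -> q != p -> Var _ q \in disj J Gm Dl.
Proof.
move=> h hq; rewrite /disj !mem_cat; apply/orP; right; apply/orP; left; apply/mapP; exists q => //.
by rewrite mem_filter hq mem_atomsL h.
Qed.

Lemma md3 (g : grp Ag) : sval g \subset agtsl Gm :\ a ->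
  Neg (Box g (Neg (J (ubx g Gm) [::]))) \in disj J Gm Dl.
Proof.
move=> h; rewrite /disj !mem_cat; apply/orP; right; apply/orP; right; apply/orP; left.
by apply/mapP; exists g => //; rewrite mem_filter h mem_grps.
Qed.

Lemma md4 (G g' : grp Ag) b : Box G b \in Dl -> sval g' = sval G :\ a ->
  Box g' (J (ubx G Gm) [:: b]) \in disj J Gm Dl.
Proof.
move=> h e; rewrite /disj !mem_cat; apply/orP; right; apply/orP; right; apply/orP; right.
rewrite mem_pmap; apply/mapP; exists (Box G b) => //=.
have -> : (insub (sval G :\ a) : option (grp Ag)) = Some g'.
  by rewrite -e; apply: valK.
by [].
Qed.

Lemma disj_cases x : x \in disj J Gm Dl ->
  [\/ exists q, [/\ x = Neg (Var _ q), Var _ q \in Gm & q != p],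
      exists q, [/\ x = Var _ q, Var _ q \in Dl & q != p],
      exists g : grp Ag, x = Neg (Box g (Neg (J (ubx g Gm) [::]))) /\ sval g \subset agtsl Gm :\ a |
      exists (G g' : grp Ag) b, [/\ x = Box g' (J (ubx G Gm) [:: b]), Box G b \in Dl & sval g' = sval G :\ a]].
Proof.
rewrite /disj !mem_cat => /orP [|/orP [|/orP []]].
- move=> /mapP [q]; rewrite mem_filter mem_atomsL => /andP [hq h] ->.
  by apply: Or41; exists q.
- move=> /mapP [q]; rewrite mem_filter mem_atomsL => /andP [hq h] ->.
  by apply: Or42; exists q.
- move=> /mapP [g]; rewrite mem_filter => /andP [hg _] ->.
  by apply: Or43; exists g.
- rewrite mem_pmap => /mapP [f hf]; case: f hf => // G b hf.
  case: insubP => // g' _ eg [->]; apply: Or44; exists G, g', b; split=> //.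
Qed.

Lemma disj_inctx x : x \in disj J Gm Dl -> inctx (Gm ++ Dl) x.
Proof.
case/disj_cases.
- move=> [q [-> h hq]]; apply: inctx_Neg; apply: inctx_Var hq.
  by rewrite mem_varsl has_cat; apply/orP; left; apply/hasP; exists (Var _ q) => //=; rewrite inE.
- move=> [q [-> h hq]]; apply: inctx_Var hq.
  by rewrite mem_varsl has_cat; apply/orP; right; apply/hasP; exists (Var _ q) => //=; rewrite inE.
- move=> [g [-> hg]]; have [i1 _ _] := IHg hg.
  have c : ctx_sub (ubx g Gm ++ [::]) (Gm ++ Dl).
    exact: ctx_sub_cat (ctx_sub_trans (ctx_sub_ubx g Gm) (ctx_sub_catl Gm Dl)) (ctx_sub_nil _).
  apply: inctx_Neg; apply: inctx_Box; last exact: inctx_Neg (inctx_mono c i1).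
  apply: subset_trans hg _; apply: setSD; rewrite agtsl_cat; exact: subsetUl.
- move=> [G [g' [b [-> hb e]]]]; have [i1 _ _] := IHb hb.
  have c : ctx_sub (ubx G Gm ++ [:: b]) (Gm ++ Dl).
    exact: ctx_sub_cat (ctx_sub_trans (ctx_sub_ubx G Gm) (ctx_sub_catl Gm Dl))
                       (ctx_sub_trans (ctx_sub_box hb) (ctx_sub_catr Gm Dl)).
  apply: inctx_Box; last exact: inctx_mono c i1.
  rewrite e; apply: setSD; rewrite agtsl_cat; apply: subset_trans (box_agts hb) _; exact: subsetUr.
Qed.

Lemma disj_deriv x : x \in disj J Gm Dl -> deriv L (x :: Gm) Dl.
Proof.
case/disj_cases.
- move=> [q [-> h hq]]; apply: d_Lneg.
  by apply: dPl (d_id L q (rem (Var _ q) Gm) Dl) _; rewrite perm_sym; apply: perm_to_rem.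
- move=> [q [-> h hq]].
  by apply: dPr (d_id L q Gm (rem (Var _ q) Dl)) _; rewrite perm_sym; apply: perm_to_rem.
- move=> [g [-> hg]]; have [_ d1 _] := IHg hg; apply: d_Lneg.
  have prem : deriv L (ubx g Gm) [:: Neg (J (ubx g Gm) [::])].
    by apply: d_Rneg; apply: dPl d1 _; pz.
  apply: dPl (d_DK (Sig := nb g Gm) (Om := Dl) prem (pb_sub g Gm) (nb_omega g hG) hD) _.
  by rewrite perm_sym; apply: split_pb.
- move=> [G [g' [b [-> hb e]]]]; have [_ d1 _] := IHb hb.
  have prem : deriv L (J (ubx G Gm) [:: b] :: ubx G Gm) [:: b].
    by apply: dPl d1 _; pz.
  have Hb : all (fun x : grp Ag * form => sval x.1 \subset sval G) ((g', J (ubx G Gm) [:: b]) :: pmap (pb G) Gm).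
    by rewrite /= e subD1set pb_sub.
  have HO : all (@omega_ok Ag) (rem (Box G b) Dl).
    by move: hD; rewrite (perm_all _ (perm_to_rem hb)) => /andP [].
  apply: dP (d_DK (boxes := (g', J (ubx G Gm) [:: b]) :: pmap (pb G) Gm) (Sig := nb G Gm) prem Hb (nb_omega G hG) HO) _ _.
    by have := split_pb G Gm; rewrite /=; move=> h; pz.
  by rewrite perm_sym; apply: perm_to_rem.
Qed.

Definition Qd (X Y : seq form) : Prop := forall Pi Lm, perm_eq X (Pi ++ Gm) ->
  perm_eq Y (Dl ++ Lm) -> all fresh (Pi ++ Lm) -> deriv L Pi (bigOr (disj J Gm Dl) :: Lm).

Lemma Q_left (P : form) G0 D0 : compound P ->
  (forall l r, (l, r) \in lprem P -> Qd (l ++ G0) (r ++ D0)) -> Qd (P :: G0) D0.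
Proof.
move=> cP IH Pi Lm pX pY fr.
have PPi : P \in Pi.
  have : P \in Pi ++ Gm by rewrite -(perm_mem pX) mem_head.
  by rewrite mem_cat => /orP [//|hP]; move: (om_nc hG hP); rewrite cP.
have pPi := perm_to_rem PPi.
move: (rem P Pi) pPi => Pi' pPi.
have pG0 : perm_eq G0 (Pi' ++ Gm) by pz.
have : all fresh (P :: Pi' ++ Lm) by rewrite -(perm_all _ (_ : perm_eq (Pi ++ Lm) _)) //; pz.
move=> /= /andP [frP fr'].
apply: dPl (_ : deriv L (P :: Pi') (bigOr (disj J Gm Dl) :: Lm)) _; last by pz.
apply: lrule cP _ => l r lr.
have fr2 : all fresh ((l ++ Pi') ++ r ++ Lm).
  rewrite (perm_all _ (_ : perm_eq _ ((l ++ r) ++ (Pi' ++ Lm)))); last by pz.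
  by rewrite all_cat fr' (fresh_lprem lr frP).
have h := IH l r lr (l ++ Pi') (r ++ Lm) ltac:(pz) ltac:(pz) fr2.
by apply: dPr h _; pz.
Qed.

Lemma Q_right (P : form) G0 D0 : compound P ->
  (forall l r, (l, r) \in rprem P -> Qd (l ++ G0) (r ++ D0)) -> Qd G0 (P :: D0).
Proof.
move=> cP IH Pi Lm pX pY fr.
have PLm : P \in Lm.
  have : P \in Dl ++ Lm by rewrite -(perm_mem pY) mem_head.
  by rewrite mem_cat => /orP [hP|//]; move: (om_nc hD hP); rewrite cP.
have pLm := perm_to_rem PLm.
move: (rem P Lm) pLm => Lm' pLm.
have pD0 : perm_eq D0 (Dl ++ Lm') by pz.
have : all fresh (P :: Pi ++ Lm') by rewrite -(perm_all _ (_ : perm_eq (Pi ++ Lm) _)) //; pz.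
move=> /= /andP [frP fr'].
apply: dPr (_ : deriv L Pi (P :: bigOr (disj J Gm Dl) :: Lm')) _; last by pz.
apply: rrule cP _ => l r lr.
have fr2 : all fresh ((l ++ Pi) ++ r ++ Lm').
  rewrite (perm_all _ (_ : perm_eq _ ((l ++ r) ++ (Pi ++ Lm')))); last by pz.
  by rewrite all_cat fr' (fresh_rprem lr frP).
have h := IH l r lr (l ++ Pi) (r ++ Lm') ltac:(pz) ltac:(pz) fr2.
by apply: dPr h _; pz.
Qed.

Lemma mem_pb (G : grp Ag) x l : x \in pmap (pb G) l -> Box x.1 x.2 \in l /\ sval x.1 \subset sval G.
Proof.
elim: l => //= f l IH; case: f => [q||f1 f2|f1 f2|f1 f2|f1|H f] /=; rewrite ?in_cons; try by move/IH => [-> ->]; rewrite orbT.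
case e: (sval H \subset sval G) => /=; last by move/IH => [-> ->]; rewrite orbT.
by rewrite in_cons => /orP [/eqP ->|/IH [-> ->]]; rewrite ?eqxx ?orbT.
Qed.

Lemma mem_pbD c x l : x \in pmap (pbD c) l -> Box (sgrp c) x \in l.
Proof.
elim: l => //= f l IH; case: f => [q||f1 f2|f1 f2|f1 f2|f1|H f] /=; rewrite ?in_cons; try by move/IH => ->; rewrite orbT.
case e: (sval H == [set c]) => /=; last by move/IH => ->; rewrite orbT.
have -> : H = sgrp c by apply: grp_eq; apply/eqP.
by rewrite in_cons => /orP [/eqP ->|/IH ->]; rewrite ?eqxx ?orbT.
Qed.

Lemma Q_DK boxes (G : grp Ag) b Sig Om :
  deriv L (map snd boxes) [:: b] ->
  all (fun x : grp Ag * form => sval x.1 \subset sval G) boxes ->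
  all (sigmaK_ok G) Sig -> all (@omega_ok Ag) Om ->
  Qd (Sig ++ map boxify boxes) (Box G b :: Om).
Proof.
move=> prem Hb HS HO Pi Lm pX pY fr.
have pbx : perm_eq boxes (pmap (pb G) Pi ++ pmap (pb G) Gm).
  by rewrite -pmap_cat -{1}(pb_DK HS Hb); apply: perm_pmap.
have prem' : deriv L (ubx G Pi ++ ubx G Gm) [:: b].
  by apply: dPl prem _; rewrite /ubx -map_cat; apply: perm_map.
have subPi : {subset Pi <= Sig ++ map boxify boxes}.
  by move=> f hf; rewrite (perm_mem pX) mem_cat hf.
have HSPi := nb_sigmaK HS subPi Hb.
have HSGm := nb_omega G hG.
have frPi : all fresh Pi by move: fr; rewrite all_cat => /andP [].
have frLm : all fresh Lm by move: fr; rewrite all_cat => /andP [].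
have : Box G b \in Dl ++ Lm by rewrite -(perm_mem pY) mem_head.
rewrite mem_cat => /orP [hb|hb].
- have pDl := perm_to_rem hb; move: (rem (Box G b) Dl) pDl => Dl' pDl.
  have pOm : perm_eq Om (Dl' ++ Lm) by pz.
  have : all (@omega_ok Ag) (Dl' ++ Lm) by rewrite -(perm_all _ pOm).
  rewrite all_cat => /andP [HODl' HOLm].
  case: (boolP (sval G :\ a == set0)) => [/eqP e0|ne0].
  + have e := pb_empty_a frPi e0.
    exfalso; apply: nGD.
    apply: dP (d_DK (boxes := pmap (pb G) Gm) (b := b) (Sig := nb G Gm) (Om := Dl') _ (pb_sub G Gm) HSGm HODl') _ _.
    * by move: prem'; rewrite /ubx e.
    * by rewrite perm_sym; apply: split_pb.
    * by rewrite perm_sym.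
  + pose g' : grp Ag := exist (fun X : {set Ag} => X != set0) (sval G :\ a) ne0.
    have eg' : sval g' = sval G :\ a by [].
    have epb : pmap (pb g') Pi = pmap (pb G) Pi := eq_in_pmap (pb_fresh_eq frPi eg').
    have [_ _ e1] := IHb hb.
    have fr1 : all fresh (ubx g' Pi ++ [::]) by rewrite cats0; apply: fresh_ubx.
    have d1 := e1 (ubx g' Pi) [::] fr1 ltac:(by rewrite cats0 /ubx epb).
    apply: bigOr_R (md4 hb eg') _.
    have HS' : all (sigmaK_ok g') (nb g' Pi).
      have -> : nb g' Pi = nb G Pi.
        apply: eq_in_filter => f hf; by rewrite (pb_fresh_eq frPi eg' hf).
      apply/allP => f hf; apply: sigmaK_mono (allP HSPi f hf); exact: subD1set.
    apply: dPl (d_DK (Sig := nb g' Pi) (Om := Lm) d1 (pb_sub g' Pi) HS' HOLm) _.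
    by rewrite perm_sym; apply: split_pb.
- have pLm := perm_to_rem hb; move: (rem (Box G b) Lm) pLm => Lm' pLm.
  have pOm : perm_eq Om (Dl ++ Lm') by pz.
  have : all (@omega_ok Ag) (Dl ++ Lm') by rewrite -(perm_all _ pOm).
  rewrite all_cat => /andP [HODl HOLm'].
  have := allP frLm _ hb; rewrite fresh_Box => /andP [aG frb].
  case E: (pmap (pb G) Gm) => [|x U].
  + apply: wkR.
    apply: dP (d_DK (boxes := pmap (pb G) Pi) (b := b) (Sig := nb G Pi) (Om := Lm') _ (pb_sub G Pi) HSPi HOLm') _ _.
    * by move: prem'; rewrite /ubx E cats0.
    * by rewrite perm_sym; apply: split_pb.
    * by rewrite perm_sym.
  + have hx : x \in pmap (pb G) Gm by rewrite E mem_head.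
    have [hxG sxG] := mem_pb hx.
    have ne : sval G :&: agtsl Gm != set0.
      have /set0Pn [h hh] := grp_ne0 x.1.
      apply/set0Pn; exists h; rewrite in_setI (subsetP sxG _ hh).
      by rewrite (subsetP (box_agts hxG) _ hh).
    pose g : grp Ag := exist (fun X : {set Ag} => X != set0) (sval G :&: agtsl Gm) ne.
    have hg : sval g \subset agtsl Gm :\ a.
      apply/subsetP => y; rewrite /= in_setI in_setD1 => /andP [yG ->]; rewrite andbT.
      by apply/eqP => ya; move: aG; rewrite -ya yG.
    have eqU : pmap (pb g) Gm = pmap (pb G) Gm.
      apply: eq_in_pmap => f hf; case: f hf => //= H f hf.
      by rewrite subsetI (box_agts hf) andbT.
    have [_ _ e1] := IHg hg.
    have fr1 : all fresh (ubx G Pi ++ [:: b]) by rewrite all_cat fresh_ubx //= frb.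
    have d1 := e1 (ubx G Pi) [:: b] fr1 ltac:(by rewrite /ubx eqU).
    apply: bigOr_R (md3 hg) _; apply: d_Rneg.
    have Hb' : all (fun x : grp Ag * form => sval x.1 \subset sval G)
                 ((g, Neg (J (ubx g Gm) [::])) :: pmap (pb G) Pi).
      by rewrite /= subsetIl pb_sub.
    apply: dP (d_DK (boxes := (g, Neg (J (ubx g Gm) [::])) :: pmap (pb G) Pi) (Sig := nb G Pi) (Om := Lm')
                (d_Lneg d1) Hb' HSPi HOLm') _ _.
    * by have := split_pb G Pi; move=> h; rewrite [map _ (_ :: _)]/=; pz.
    * by rewrite perm_sym.
Qed.

Lemma Q_DD c Gm0 Sig Om : L = LKD -> Gm0 <> [::] -> deriv L Gm0 [::] ->
  all (sigmaD_ok c) Sig -> all (@omega_ok Ag) Om ->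
  Qd (Sig ++ map (Box (sgrp c)) Gm0) Om.
Proof.
move=> eL nG prem HS HO Pi Lm pX pY fr.
have pG0 : perm_eq Gm0 (pmap (pbD c) Pi ++ pmap (pbD c) Gm).
  by have := perm_pmap (pbD c) pX; rewrite (pbD_DD _ HS) pmap_cat.
have prem' : deriv L (pmap (pbD c) Pi ++ pmap (pbD c) Gm) [::] by apply: dPl prem _.
have subPi : {subset Pi <= Sig ++ map (Box (sgrp c)) Gm0}.
  by move=> f hf; rewrite (perm_mem pX) mem_cat hf.
have HSPi := nbD_sigmaD HS subPi.
have HSGm := nbD_omega c hG.
have : all (@omega_ok Ag) (Dl ++ Lm) by rewrite -(perm_all _ pY).
rewrite all_cat => /andP [HODl HOLm].
have frPi : all fresh Pi by move: fr; rewrite all_cat => /andP [].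
have ne : forall l1 l2 : seq form, perm_eq Gm0 (l1 ++ l2) -> l1 ++ l2 <> [::].
  by move=> l1 l2 h e; apply: nG; apply/size0nil; rewrite (perm_size h) e.
case: (c =P a) => [ec|nca].
- have e := pbD_empty_a frPi; rewrite -ec in e.
  exfalso; apply: nGD.
  apply: dPl (d_DD (a := c) (Gm := pmap (pbD c) Gm) (Sig := nbD c Gm) (Om := Dl) eL _ _ HSGm HODl) _.
  + by move: (ne _ _ pG0); rewrite e.
  + by move: prem'; rewrite e.
  + by rewrite perm_sym; apply: split_pbD.
- case E: (pmap (pbD c) Gm) => [|x U].
  + apply: wkR.
    apply: dPl (d_DD (a := c) (Gm := pmap (pbD c) Pi) (Sig := nbD c Pi) (Om := Lm) eL _ _ HSPi HOLm) _.
    * by move: (ne _ _ pG0); rewrite E cats0.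
    * by move: prem'; rewrite E cats0.
    * by rewrite perm_sym; apply: split_pbD.
  + have hx : x \in pmap (pbD c) Gm by rewrite E mem_head.
    have hxG := mem_pbD hx.
    have hg : sval (sgrp c) \subset agtsl Gm :\ a.
      rewrite /= sub1set in_setD1; apply/andP; split; first by apply/eqP.
      by apply: (subsetP (box_agts hxG)); rewrite /= set11.
    have [_ _ e1] := IHg hg.
    have fr1 : all fresh (pmap (pbD c) Pi ++ [::]) by rewrite cats0; apply: fresh_pbD.
    have d1 := e1 (pmap (pbD c) Pi) [::] fr1 ltac:(by rewrite cats0 ubx_sgrp).
    apply: bigOr_R (md3 hg) _; apply: d_Rneg.
    apply: dPl (d_DD (a := c) (Gm := Neg (J (ubx (sgrp c) Gm) [::]) :: pmap (pbD c) Pi) (Sig := nbD c Pi) (Om := Lm)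
                  eL _ (d_Lneg d1) HSPi HOLm) _; first by [].
    by have := split_pbD c Pi; move=> h; rewrite [map _ (_ :: _)]/=; pz.
Qed.

Lemma irr_iii X Y : deriv L X Y -> Qd X Y.
Proof.
elim=> {X Y}.
- move=> G D G' D' _ IH pG pD Pi Lm pX pY fr.
  move/pe_of_Perm: pG => pG; move/pe_of_Perm: pD => pD.
  by apply: IH => //; pz.
- move=> q G0 D0 Pi Lm pX pY fr.
  have h1 : Var _ q \in Pi ++ Gm by rewrite -(perm_mem pX) mem_head.
  have h2 : Var _ q \in Dl ++ Lm by rewrite -(perm_mem pY) mem_head.
  have hq : (Var _ q \in Pi ++ Lm) -> q != p.
    move=> hm; move: (allP fr _ hm); rewrite /fresh /= inE => /andP [hq _].
    by rewrite eq_sym.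
  move: h1 h2; rewrite !mem_cat => /orP [h1|h1] /orP [h2|h2].
  + apply: bigOr_R (md2 h2 (hq ltac:(by rewrite mem_cat h1))) _.
    by apply: dPl (d_id L q (rem (Var _ q) Pi) Lm) _; rewrite perm_sym; apply: perm_to_rem.
  + have e1 := perm_to_rem h1; have e2 := perm_to_rem h2.
    apply: dP (d_id L q (rem (Var _ q) Pi) (bigOr (disj J Gm Dl) :: rem (Var _ q) Lm)) _ _; pz.
  + exfalso; apply: nGD.
    have e1 := perm_to_rem h1; have e2 := perm_to_rem h2.
    apply: dP (d_id L q (rem (Var _ q) Gm) (rem (Var _ q) Dl)) _ _; pz.
  + apply: bigOr_R (md1 h1 (hq ltac:(by rewrite mem_cat h2 orbT))) _.
    apply: d_Rneg.
    by apply: dPr (d_id L q Pi (rem (Var _ q) Lm)) _; rewrite perm_sym; apply: perm_to_rem.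
- move=> G0 D0 Pi Lm pX pY fr.
  have : Bot _ \in Pi ++ Gm by rewrite -(perm_mem pX) mem_head.
  rewrite mem_cat => /orP [h|h]; have e := perm_to_rem h.
    by apply: dPl (d_bot L (rem (Bot _) Pi) _) _; pz.
  exfalso; apply: nGD; apply: dPl (d_bot L (rem (Bot _) Gm) Dl) _; pz.
- move=> G D a1 a2 _ IH1 _ IH2; apply: Q_right => // l r.
  by rewrite !inE => /orP [] /eqP [-> ->].
- move=> G D a1 a2 _ IH; apply: Q_left => // l r.
  by rewrite !inE => /eqP [-> ->].
- move=> G D a1 a2 _ IH; apply: Q_right => // l r.
  by rewrite !inE => /eqP [-> ->].
- move=> G D a1 a2 _ IH1 _ IH2; apply: Q_left => // l r.
  by rewrite !inE => /orP [] /eqP [-> ->].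
- move=> G D a1 a2 _ IH; apply: Q_right => // l r.
  by rewrite !inE => /eqP [-> ->].
- move=> G D a1 a2 _ IH1 _ IH2; apply: Q_left => // l r.
  by rewrite !inE => /orP [] /eqP [-> ->].
- move=> G D a1 _ IH; apply: Q_right => // l r.
  by rewrite !inE => /eqP [-> ->].
- move=> G D a1 _ IH; apply: Q_left => // l r.
  by rewrite !inE => /eqP [-> ->].
- move=> boxes G b Sig Om prem _ Hb HS HO; exact: Q_DK prem Hb HS HO.
- move=> c Gm0 Sig Om eL nG prem _ HS HO; exact: Q_DD eL nG prem HS HO.
Qed.

Lemma irr_good : good Gm Dl (bigOr (disj J Gm Dl)).
Proof.
split.
- by apply: inctx_bigOr => x; apply: disj_inctx.
- by apply: dPl (bigOr_L disj_deriv) _; pz.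
- move=> Pi Lm fr d; exact: (irr_iii d (perm_refl _) (perm_refl _) fr).
Qed.

End Irr.

Lemma main n : forall Gm Dl, msize Gm + msize Dl < n -> good Gm Dl (itp n Gm Dl).
Proof.
elim: n => [|n IH] Gm Dl hn //=.
case E: (pickc Gm) => [[f r]|].
  have [pG cf] := pickc_some E.
  by apply: lstep_good pG cf _ => Gm' Dl' h; apply: IH; lia.
case E2: (pickc Dl) => [[f r]|].
  have [pD cf] := pickc_some E2.
  by apply: rstep_good pD cf _ => Gm' Dl' h; apply: IH; lia.
have hG := pickc_none E; have hD := pickc_none E2.
case: excluded_middle_informative => [dGD|nGD].
  split; first exact: inctx_Top.
    by apply: dPl (wkL Top dGD) _; pz.
  by move=> Pi Lm _ _; apply: d_Rneg; apply: d_bot.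
apply: irr_good => //.
- move=> g hg; apply: IH.
  have ne : 0 < size Gm.
    have /set0Pn [x hx] := grp_ne0 g.
    move: (subsetP hg x hx); rewrite in_setD1 => /andP [_].
    by case: (Gm) => //; rewrite /agtsl big_nil in_set0.
  have := msize_ubx g Gm; rewrite /= /msize /=; move: hn; rewrite /msize; lia.
- move=> G b hb; apply: IH.
  have := msize_ubx G Gm; have := msize_mem hb; rewrite /= /msize /=; move: hn; rewrite /msize; lia.
Qed.
End S.

Unset Implicit Arguments.

Theorem theorem5p5 (Ag : finType) (HAg : 0 < #|Ag|) (L : logic)
    (Gm Dl : seq (form Ag)) (p : nat) (a : Ag) :
  exists F : form Ag,
    [/\ {subset vars F <= [seq q <- varsl (Gm ++ Dl) | q != p]},
        agts F \subset agtsl (Gm ++ Dl) :\ a,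
        deriv L (Gm ++ [:: F]) Dl &
        forall Pi Lm : seq (form Ag),
          p \notin varsl (Pi ++ Lm) ->
          a \notin agtsl (Pi ++ Lm) ->
          deriv L (Pi ++ Gm) (Dl ++ Lm) ->
          deriv L Pi (F :: Lm)].
Proof.
exists (itp L p a (msize Gm + msize Dl).+1 Gm Dl).
have [i d e] := main L p a (ltnSn (msize Gm + msize Dl)).
move/andP: i => [i1 i2]; split=> //.
- by move=> q hq; rewrite mem_filter; move: (allP i1 q hq) => /andP [-> ->].
- by move=> Pi Lm h1 h2 d'; apply: e => //; rewrite -fresh_all h1 h2.
Qed.
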